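(* Let $a\in\mathbb{C}$ with $|a-\tfrac14|\le\tfrac14$, $a\neq0$, and $\varphi(z)=az^2+(1-2a)z+a$. Then: (i) if $|a-\tfrac14|<\tfrac14$, $\varphi$ is essentially linear fractional (with $\eta=\zeta=1$); (ii) if $|a-\tfrac14|=\tfrac14$ and $a\neq\tfrac12$, then $\varphi$ is not essentially linear fractional, but $\varphi\circ\varphi$ is essentially linear fractional; (iii) if $a=\tfrac12$, i.e. $\varphi(z)=\tfrac12z^2+\tfrac12$, then no iterate $\varphi_n$ ($n\ge1$) is essentially linear fractional.
   Context: An analytic self-map $\varphi$ of the open unit disk $\mathbb{D}$ is called essentially linear fractional if (1) $\varphi(\mathbb{D})$ is contained in a proper subdisk of $\mathbb{D}$ internally tangent to the unit circle at some point $\eta\in\partial\mathbb{D}$; (2) the set $\varphi^{-1}(\{\eta\}):=\{\gamma\in\partial\mathbb{D}:\eta \text{ belongs to the cluster set of } \varphi \text{ at } \gamma\}$ consists of exactly one point $\zeta\in\partial\mathbb{D}$; and (3) $\varphi'''$ extends continuously to $\mathbb{D}\cup\{\zeta\}$. (For $\varphi$ analytic on a neighborhood of $\overline{\mathbb{D}}$, the cluster-set condition in (2) just means $\varphi(\gamma)=\eta$.) $\varphi_n$ denotes the $n$-th iterate of $\varphi$. *)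

(* Defs.v *)
From Stdlib Require Import Reals.
From Coquelicot Require Import Coquelicot.
Open Scope R_scope.

Definition unit_disk (z : C) : Prop := Cmod z < 1.
Definition unit_circle (z : C) : Prop := Cmod z = 1.

Definition holomorphic_on_disk (f : C -> C) : Prop :=
  forall z, unit_disk z -> ex_derive f z.

Definition analytic_selfmap (phi : C -> C) : Prop :=
  holomorphic_on_disk phi /\ (forall z, unit_disk z -> unit_disk (phi z)).

(* phi(D) is contained in a proper subdisk of D internally tangent to the
   unit circle at eta; such a disk is {z : |z - (1-r) eta| < r} with 0<r<1 *)
Definition in_tangent_subdisk (phi : C -> C) (eta : C) : Prop :=
  exists r : R, 0 < r < 1 /\
    forall z, unit_disk z ->
      Cmod (Cminus (phi z) (Cmult (RtoC (1 - r)) eta)) < r.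

Definition in_cluster_set (phi : C -> C) (gamma w : C) : Prop :=
  forall eps : R, 0 < eps ->
    exists z, unit_disk z /\ Cmod (Cminus z gamma) < eps /\
              Cmod (Cminus (phi z) w) < eps.

(* phi''' (complex third derivative on D) extends continuously to D ∪ {zeta} *)
Definition third_deriv_extends (phi : C -> C) (zeta : C) : Prop :=
  exists f1 f2 f3 : C -> C,
    (forall z, unit_disk z -> is_derive phi z (f1 z)) /\
    (forall z, unit_disk z -> is_derive f1 z (f2 z)) /\
    (forall z, unit_disk z -> is_derive f2 z (f3 z)) /\
    exists L : C, forall eps : R, 0 < eps -> exists delta : R, 0 < delta /\
      forall z, unit_disk z -> Cmod (Cminus z zeta) < delta ->
        Cmod (Cminus (f3 z) L) < eps.

(* essentially linear fractional, with the tangency point eta and the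
   unique boundary preimage zeta made explicit *)
Definition ELF_at (phi : C -> C) (eta zeta : C) : Prop :=
  analytic_selfmap phi /\ unit_circle eta /\ unit_circle zeta /\
  in_tangent_subdisk phi eta /\
  (forall gamma, unit_circle gamma ->
     (in_cluster_set phi gamma eta <-> gamma = zeta)) /\
  third_deriv_extends phi zeta.

Definition essentially_linear_fractional (phi : C -> C) : Prop :=
  exists eta zeta : C, ELF_at phi eta zeta.

Definition quad_map (a : C) (z : C) : C :=
  Cplus (Cplus (Cmult a (Cmult z z)) (Cmult (Cminus (RtoC 1) (Cmult (RtoC 2) a)) z)) a.

Definition iterate (phi : C -> C) (n : nat) : C -> C := fun z => Nat.iter n phi z.

(* Main.v *)
Require Import Defs.
From Stdlib Require Import Reals Lra Psatz Lia.
From Coquelicot Require Import Coquelicot.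
Open Scope R_scope.
Definition n2 (z : C) : R := fst z ^ 2 + snd z ^ 2.
Lemma n2_cmod z : n2 z = Cmod z ^ 2.
Proof. unfold Cmod, n2. rewrite pow2_sqrt. reflexivity. nra. Qed.

Definition Nv (p q : R) (s : C) : R := (fst s - p) ^ 2 + (snd s - q) ^ 2.
Definition Fc (p q : R) (s : C) : C :=
  (fst s + p + ((p^2 - q^2) * (fst s - p) + 2 * p * q * (snd s - q)) / Nv p q s,
   snd s + q + (2 * p * q * (fst s - p) - (p^2 - q^2) * (snd s - q)) / Nv p q s).

Lemma Fc_mul p q s : 0 < Nv p q s ->
  Cmult (Fc p q s) (Cminus s (p, q)) = Cmult s s.
Proof.
  intros HN. destruct s as [x y]. unfold Fc, Nv in *. simpl in *.
  unfold Cmult, Cminus, Cplus, Copp; simpl.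
  apply injective_projections; simpl; field; lra.
Qed.

Lemma Cmult_cancel (x y : C) : Cmult x y = 0 -> y <> 0 -> x = 0.
Proof.
  intros H Hy. replace x with (Cmult (Cmult x y) (Cinv y)).
  rewrite H. ring. rewrite <- Cmult_assoc, Cinv_r by exact Hy. ring.
Qed.

Lemma link (p q : R) (z s : C) : Cmult (Cminus 1 z) s = 1 -> 0 < Nv p q s ->
  Cmult (Cminus 1 (quad_map (p, q) z)) (Fc p q s) = 1.
Proof.
  intros H1 HN. pose proof (Fc_mul p q s HN) as H2.
  assert (Hne : Cminus s (p, q) <> 0).
  { intro E. unfold Nv in HN. destruct s as [x y]. simpl in HN. injection E as E1 E2. assert (x = p) by lra. assert (y = q) by lra. subst. lra. }
  set (a := (p, q)) in *. set (w := Cminus 1 z) in *. set (F := Fc p q s) in *.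
  assert (Hq : Cminus 1 (quad_map a z) = Cminus w (Cmult a (Cmult w w))).
  { unfold w, quad_map. ring. }
  rewrite Hq. apply Cminus_eq_0 || idtac.
  assert (E : Cmult (Cminus (Cmult (Cminus w (Cmult a (Cmult w w))) F) 1) (Cminus s a) = 0).
  { transitivity (Cminus (Cmult (Cminus w (Cmult a (Cmult w w))) (Cmult F (Cminus s a))) (Cminus s a)).
    ring. rewrite H2.
    transitivity (Cminus (Cminus (Cmult (Cmult w s) s) (Cmult a (Cmult (Cmult w s) (Cmult w s)))) (Cminus s a)).
    ring. rewrite H1. ring. }
  apply Cmult_cancel in E; [|exact Hne].
  transitivity (Cplus (Cminus (Cmult (Cminus w (Cmult a (Cmult w w))) F) 1) 1). ring.
  rewrite E. ring.
Qed.

Lemma cmod_lt_iff z r : 0 <= r -> (Cmod z < r <-> n2 z < r ^ 2).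
Proof.
  intros Hr. rewrite n2_cmod. pose proof (Cmod_ge_0 z). split; intro; nra.
Qed.

Lemma modlt (w S : C) (r : R) : Cmult (Cminus 1 w) S = 1 -> 0 < r -> fst S > 1 / (2 * r) ->
  Cmod (Cminus w (Cmult (RtoC (1 - r)) (RtoC 1))) < r.
Proof.
  intros H Hr HS. apply cmod_lt_iff; [lra|].
  destruct w as [w1 w2], S as [S1 S2]. unfold n2, Cminus, Cplus, Copp, Cmult, RtoC in *; simpl in *.
  injection H as E1 E2.
  set (u1 := 1 + - w1) in *. set (u2 := 0 + - w2) in *.
  assert (HS2 : 2 * r * S1 > 1).
  { apply Rmult_gt_compat_l with (r := 2 * r) in HS; [|lra].
    replace (2 * r * (1 / (2 * r))) with 1 in HS by (field; lra). lra. }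
  set (N := S1 * S1 + S2 * S2).
  assert (HN : 0 < N). { unfold N. nra. }
  assert (U1 : u1 * N = S1).
  { transitivity (S1*(u1*S1 - u2*S2) + S2*(u1*S2+u2*S1)). unfold N; ring. rewrite E1, E2; ring. }
  assert (U2 : u2 * N = - S2).
  { transitivity (-S2*(u1*S1 - u2*S2) + S1*(u1*S2+u2*S1)). unfold N; ring. rewrite E1, E2; ring. }
  assert (UU : (u1 * u1 + u2 * u2) * N = 1).
  { transitivity (u1 * (u1 * N) + u2 * (u2 * N)). ring. rewrite U1, U2. lra. }
  assert (G : (u1 * u1 + u2 * u2) < 2 * r * u1).
  { apply Rmult_lt_reg_r with N; [exact HN|]. rewrite UU.
    replace (2 * r * u1 * N) with (2 * r * S1) by (rewrite <- U1; ring). lra. }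
  replace (w1 + - ((1 - r) * 1 - 0 * 0)) with (r - u1) by (unfold u1; ring).
  replace (w2 + - ((1 - r) * 0 + 0 * 1)) with (- u2) by (unfold u2; ring).
  nra.
Qed.

Lemma disk_to_s z : unit_disk z -> exists s, Cmult (Cminus 1 z) s = 1 /\ fst s > 1/2.
Proof.
  unfold unit_disk. intro H. apply cmod_lt_iff in H; [|lra].
  destruct z as [x y]. unfold n2 in H; simpl in H.
  set (d := (1 - x) ^ 2 + y ^ 2).
  assert (Hd : 0 < d) by (unfold d; nra).
  exists ((1 - x) / d, y / d). split.
  - unfold Cmult, Cminus, Cplus, Copp, RtoC; simpl. apply injective_projections; simpl.
    + unfold d in *. field. lra.
    + field. lra.
  - simpl. apply Rmult_gt_reg_l with (2 * d); [lra|].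
    replace (2 * d * ((1 - x) / d)) with (2 * (1 - x)) by (field; lra).
    unfold d. nra.
Qed.

Lemma Fre_identity p q s : 0 < fst s - p ->
  (fst (Fc p q s) - fst s - p) * Nv p q s * (fst s - p) + q ^ 2 * Nv p q s =
  (p * (fst s - p) + q * (snd s - q)) ^ 2.
Proof.
  intros Hc. destruct s as [x y]. unfold Fc, Nv; simpl in *.
  assert (0 < (x - p) ^ 2) by (apply pow_lt; lra).
  pose proof (pow2_ge_0 (y - q)).
  field. lra.
Qed.

Lemma Fre_lower p q s : 0 < fst s - p ->
  fst (Fc p q s) >= fst s + p - q ^ 2 / (fst s - p).
Proof.
  intros Hc. pose proof (Fre_identity p q s Hc) as E.
  assert (HN : 0 < Nv p q s).
  { unfold Nv. assert (0 < (fst s - p) ^ 2) by (apply pow_lt; lra). pose proof (pow2_ge_0 (snd s - q)). lra. }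
  set (c := fst s - p) in *. set (X := fst (Fc p q s) - fst s - p) in *.
  assert (0 <= X * c + q ^ 2).
  { apply Rmult_le_reg_r with (Nv p q s); [lra|].
    pose proof (pow2_ge_0 (p * c + q * (snd s - q))).
    replace ((X * c + q ^ 2) * Nv p q s) with (X * Nv p q s * c + q ^ 2 * Nv p q s) by ring. lra. }
  assert (- (q ^ 2 / c) <= X).
  { apply Rmult_le_reg_r with c; [lra|]. replace (- (q^2 / c) * c) with (- q^2) by (field; lra). lra. }
  unfold X in *. lra.
Qed.

Definition Mc (p : R) := 1 + p / (2 * (1/2 - p) ^ 2).
Definition Wc (p : R) := 5 + 1 / (8 * (1/2 - p) ^ 2).
Definition delta (p q : R) :=
  Rmin (Rmin (1/2) (q^2/8)) (Rmin (p^2 / (80 * Mc p ^ 2)) (p^2 / (16 * Wc p))).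

Lemma delta_pos p q : 0 < p < 1/2 -> 0 < q^2 -> 0 < delta p q.
Proof.
  intros Hp Hq. assert (Hb : 0 < (1/2 - p)^2) by (apply pow_lt; lra).
  assert (HM : 0 < Mc p). { unfold Mc. assert (0 < p / (2 * (1/2-p)^2)) by (apply Rdiv_lt_0_compat; lra). lra. }
  assert (HW : 0 < Wc p). { unfold Wc. assert (0 < 1 / (8 * (1/2-p)^2)) by (apply Rdiv_lt_0_compat; lra). lra. }
  unfold delta. repeat apply Rmin_pos; try lra.
  - apply Rdiv_lt_0_compat. apply pow_lt; lra. assert (0 < Mc p ^ 2) by (apply pow_lt; lra). lra.
  - apply Rdiv_lt_0_compat. apply pow_lt; lra. lra.
Qed.

Lemma key2 p q sg t sg' sg'' N N' K K' :
  p^2 + q^2 = p/2 -> 0 < q^2 -> sg > 1/2 ->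
  N = (sg - p)^2 + (t - q)^2 -> K = p * sg + q * t - p/2 ->
  sg' >= sg ->
  (sg' - sg) * (sg - p) * N >= K^2 ->
  sg'' >= sg' ->
  (sg'' - sg') * (sg' - p) * N' >= K'^2 ->
  0 <= N' -> N' <= 2 * (sg^2 + t^2) + p^2 / (2 * N) ->
  K' * N = (p/2) * N + K * (N + p/2) ->
  sg'' - 1/2 >= delta p q.
Proof.
  intros Hpq Hq Hs HN HK H1a H1b H2a H2b HN'0 HN' HKK.
  assert (Hp : 0 < p < 1/2) by nra.
  set (b := 1/2 - p) in *.
  assert (Hb : 0 < b < 1/2) by (unfold b; lra).
  assert (Hqb : q^2 = p * b) by (unfold b; nra).
  assert (Hd := delta_pos p q Hp Hq).
  assert (Hd1 : delta p q <= 1/2) by (unfold delta; eapply Rle_trans; [apply Rmin_l|]; apply Rmin_l).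
  assert (Hd2 : delta p q <= q^2/8) by (unfold delta; eapply Rle_trans; [apply Rmin_l|]; apply Rmin_r).
  assert (Hd3 : delta p q <= p^2 / (80 * Mc p ^ 2)) by (unfold delta; eapply Rle_trans; [apply Rmin_r|]; apply Rmin_l).
  assert (Hd4 : delta p q <= p^2 / (16 * Wc p)) by (unfold delta; eapply Rle_trans; [apply Rmin_r|]; apply Rmin_r).
  set (d := delta p q) in *.
  destruct (Rle_or_lt d (sg' - 1/2)) as [Hbig | Hsmall]; [lra|].
  set (x := sg - 1/2) in *.
  assert (Hx : 0 < x < d) by (unfold x; lra).
  assert (Hc : sg - p = x + b) by (unfold x, b; ring).
  assert (HcN : b^2 <= N).
  { rewrite HN, Hc. pose proof (pow2_ge_0 (t - q)). nra. }
  assert (HNpos : 0 < N) by nra.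
  assert (HK2 : K^2 <= d * N).
  { assert (0 <= sg' - sg < d) by (unfold x in *; lra).
    assert (0 < sg - p < 1) by lra.
    assert ((sg' - sg) * (sg - p) <= d) by nra.
    nra. }
  assert (HNt : N <= 2 + 2 * t^2).
  { rewrite HN. assert ((sg - p)^2 <= 1) by nra. assert ((t - q)^2 <= 2 * t^2 + 2 * q^2) by (pose proof (pow2_ge_0 (t + q)); nra). assert (q^2 <= 1/2) by nra. lra. }
  assert (HqtK : q * t = K - p * x). { unfold x. rewrite HK. field. }
  assert (Hqt2 : q^2 * t^2 <= 2 * K^2 + 2 * d^2).
  { replace (q^2 * t^2) with ((q*t)^2) by ring. rewrite HqtK.
    assert (0 <= p * x <= d) by nra.
    assert ((p * x)^2 <= d^2) by nra.
    pose proof (pow2_ge_0 (K + p * x)). nra. }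
  assert (Ht2 : t^2 <= 5/4).
  { assert (q^2 * t^2 <= 4 * d + 4 * d * t^2 + 2 * d^2) by nra.
    assert (4 * d * t^2 <= q^2 * t^2 / 2) by (pose proof (pow2_ge_0 t); nra).
    assert (q^2 * t^2 <= 10 * d) by nra.
    assert (q^2 * t^2 <= 10 * (q^2/8)) by lra. nra. }
  assert (HK5 : K^2 <= 5 * d) by nra.
  assert (Hb2 : 0 < b^2) by (apply pow_lt; lra).
  set (m1 := 1 + p / (2 * N)).
  assert (Hm1 : 1 <= m1 <= Mc p).
  { unfold m1, Mc. split.
    - assert (0 <= p / (2 * N)) by (apply Rlt_le, Rdiv_lt_0_compat; lra). lra.
    - assert (p / (2 * N) <= p / (2 * (1/2 - p)^2)).
      { apply Rmult_le_compat_l; [lra|]. apply Rinv_le_contravar. fold b. lra. fold b. lra. }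
      lra. }
  assert (HKm : K' = p/2 + K * m1).
  { apply Rmult_eq_reg_r with N; [|lra]. rewrite HKK. unfold m1. field. lra. }
  assert (HMp : 0 < Mc p) by lra.
  assert (HM2 : 5 * d * (Mc p)^2 <= p^2 / 16).
  { assert (0 < Mc p ^ 2) by (apply pow_lt; lra).
    assert (d * (80 * Mc p ^ 2) <= p^2) .
    { apply Rmult_le_compat_r with (r := 80 * Mc p ^ 2) in Hd3; [|lra].
      replace (p ^ 2 / (80 * Mc p ^ 2) * (80 * Mc p ^ 2)) with (p^2) in Hd3 by (field; lra). lra. }
    lra. }
  assert (HKm2 : (K * m1)^2 <= p^2/16).
  { assert (E2 : m1^2 <= Mc p ^2).
    { simpl. rewrite !Rmult_1_r. apply Rmult_le_compat; lra. }
    replace ((K*m1)^2) with (K^2 * m1^2) by ring.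
    assert (0 <= K^2) by apply pow2_ge_0.
    assert (K^2 * m1^2 <= K^2 * Mc p ^ 2) by (apply Rmult_le_compat_l; lra).
    assert (K^2 * Mc p ^ 2 <= 5 * d * Mc p ^2).
    { apply Rmult_le_compat_r; [apply pow2_ge_0|lra]. }
    lra. }
  assert (HK' : K' >= p/4).
  { destruct (Rle_or_lt (p/4) K') as [|Hl]; [lra|]. exfalso.
    set (y := K * m1) in *.
    assert (y < - (p/4)) by lra.
    assert ((p/4)^2 < y^2).
    { assert (0 < p/4) by lra. assert (0 < -y) by lra.
      nra. }
    replace ((p/4)^2) with (p^2/16) in H0 by field. lra. }
  assert (HN'b : N' <= Wc p).
  { assert (Hsg : sg^2 <= 1).
    { assert (0 < sg < 1) by lra. simpl. rewrite Rmult_1_r. nra. }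
    assert (p^2 <= 1/4) by (simpl; rewrite Rmult_1_r; nra).
    assert (Hinv : / (2 * N) <= / (2 * b^2)) by (apply Rinv_le_contravar; lra).
    assert (p^2 / (2 * N) <= 1 / (8 * b^2)).
    { unfold Rdiv. replace (1 * / (8 * b^2)) with (1/4 * / (2 * b^2)) by (field; lra).
      apply Rmult_le_compat; try lra. apply pow2_ge_0.
      left; apply Rinv_0_lt_compat; lra. }
    unfold Wc. fold b. lra. }
  assert (Hc' : 0 < sg' - p <= 1) by lra.
  assert (HW : 0 < Wc p).
  { unfold Wc. fold b. assert (0 < 1 / (8 * b^2)) by (apply Rdiv_lt_0_compat; lra). lra. }
  assert (HQ : (sg'' - sg') * Wc p >= p^2/16).
  { assert (A1 : (sg' - p) * N' <= Wc p).
    { assert ((sg' - p) * N' <= 1 * N') by (apply Rmult_le_compat_r; lra). lra. }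
    assert (A2 : (sg'' - sg') * ((sg' - p) * N') <= (sg'' - sg') * Wc p).
    { apply Rmult_le_compat_l; lra. }
    assert (A3 : K'^2 >= p^2/16).
    { assert ((p/4)^2 <= K'^2) by (apply pow_incr; lra).
      replace ((p/4)^2) with (p^2/16) in H by field. lra. }
    rewrite <- Rmult_assoc in A2. lra. }
  assert (HdW : d * (16 * Wc p) <= p^2).
  { apply Rmult_le_compat_r with (r := 16 * Wc p) in Hd4; [|lra].
    replace (p ^ 2 / (16 * Wc p) * (16 * Wc p)) with (p^2) in Hd4 by (field; lra). lra. }
  assert (sg'' - sg' >= d).
  { apply Rle_ge, Rmult_le_reg_r with (Wc p); [lra|]. lra. }
  lra.
Qed.

Lemma Kprime_id p q s : 0 < fst s - p ->
  (p * fst (Fc p q s) + q * snd (Fc p q s) - (p^2 + q^2)) * Nv p q s =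
  (p^2 + q^2) * Nv p q s + (p * fst s + q * snd s - (p^2 + q^2)) * (Nv p q s + (p^2 + q^2)).
Proof.
  intros Hc. destruct s as [x y]. unfold Fc, Nv; simpl in *.
  assert (0 < (x - p) ^ 2) by (apply pow_lt; lra).
  pose proof (pow2_ge_0 (y - q)).
  field. lra.
Qed.

Lemma Nv_F_bound p q s : 0 < fst s - p ->
  Nv p q (Fc p q s) <= 2 * (fst s ^ 2 + snd s ^ 2) + 2 * (p^2 + q^2)^2 / Nv p q s.
Proof.
  intros Hc. assert (HN : 0 < Nv p q s).
  { unfold Nv. assert (0 < (fst s - p) ^ 2) by (apply pow_lt; lra). pose proof (pow2_ge_0 (snd s - q)). lra. }
  destruct s as [x y]. unfold Fc in *. unfold Nv at 1. cbn [fst snd] in *.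
  set (N := Nv p q (x, y)) in *.
  assert (HNe : N = (x - p)^2 + (y - q)^2) by reflexivity.
  set (al := (p ^ 2 - q ^ 2) * (x - p) + 2 * p * q * (y - q)).
  set (be := 2 * p * q * (x - p) - (p ^ 2 - q ^ 2) * (y - q)).
  assert (Hab : al^2 + be^2 = (p^2+q^2)^2 * N) by (unfold al, be; rewrite HNe; ring).
  replace (x + p + al / N - p) with (x + al / N) by ring.
  replace (y + q + be / N - q) with (y + be / N) by ring.
  assert (Hs : (al/N)^2 + (be/N)^2 = (p^2+q^2)^2 / N).
  { replace ((al/N)^2 + (be/N)^2) with ((al^2 + be^2) / N^2) by (field; lra).
    rewrite Hab. field. lra. }
  pose proof (pow2_ge_0 (x - al / N)). pose proof (pow2_ge_0 (y - be / N)).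
  assert (E : (x + al/N)^2 + (y + be/N)^2 + (x - al/N)^2 + (y - be/N)^2
             = 2 * (x^2 + y^2) + 2 * ((al/N)^2 + (be/N)^2)) by ring.
  rewrite Hs in E. replace (2 * (p ^ 2 + q ^ 2) ^ 2 / N) with (2 * ((p ^ 2 + q ^ 2) ^ 2 / N)) by (field; lra). lra.
Qed.

Lemma R1_circle p q s : p^2 + q^2 = p/2 -> fst s >= 1/2 -> 0 < fst s - p ->
  (fst (Fc p q s) - fst s) * (fst s - p) * Nv p q s >= (p * fst s + q * snd s - p/2)^2 /\
  fst (Fc p q s) >= fst s.
Proof.
  intros Hpq Hs Hc. pose proof (Fre_identity p q s Hc) as E.
  assert (HN : 0 < Nv p q s).
  { unfold Nv. assert (0 < (fst s - p) ^ 2) by (apply pow_lt; lra). pose proof (pow2_ge_0 (snd s - q)). lra. }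
  assert (HK : p * (fst s - p) + q * (snd s - q) = p * fst s + q * snd s - p/2).
  { replace (p * (fst s - p) + q * (snd s - q)) with (p * fst s + q * snd s - (p^2 + q^2)) by ring.
    rewrite Hpq. reflexivity. }
  rewrite HK in E.
  set (K := p * fst s + q * snd s - p/2) in *.
  set (N := Nv p q s) in *. set (c := fst s - p) in *.
  assert (Hpc : p * c - q^2 >= 0).
  { assert (q^2 = p/2 - p^2) by lra. assert (0 <= p) by nra. unfold c. nra. }
  assert (E2 : (fst (Fc p q s) - fst s) * c * N = K^2 + (p * c - q^2) * N).
  { rewrite <- E. ring. }
  assert (0 <= (p * c - q^2) * N) by (apply Rmult_le_pos; lra).
  assert (0 <= K^2) by apply pow2_ge_0.
  split. lra.
  assert (0 <= (fst (Fc p q s) - fst s) * (c * N)) by (rewrite <- Rmult_assoc; lra).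
  assert (0 < c * N) by (apply Rmult_lt_0_compat; lra).
  destruct (Rle_or_lt 0 (fst (Fc p q s) - fst s)). lra.
  exfalso. assert ((fst (Fc p q s) - fst s) * (c * N) < 0).
  { rewrite Rmult_comm. apply Rmult_lt_0_compat_neg || nra. }
  lra.
Qed.

Lemma case2_bound p q s : p^2 + q^2 = p/2 -> 0 < q^2 -> fst s > 1/2 ->
  fst (Fc p q (Fc p q s)) - 1/2 >= delta p q.
Proof.
  intros Hpq Hq Hs.
  assert (Hp : 0 < p < 1/2) by nra.
  assert (Hc : 0 < fst s - p) by lra.
  destruct (R1_circle p q s Hpq ltac:(lra) Hc) as [H1b H1a].
  set (s' := Fc p q s) in *.
  assert (Hc' : 0 < fst s' - p) by lra.
  destruct (R1_circle p q s' Hpq ltac:(lra) Hc') as [H2b H2a].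
  assert (HN : 0 < Nv p q s).
  { unfold Nv. assert (0 < (fst s - p) ^ 2) by (apply pow_lt; lra). pose proof (pow2_ge_0 (snd s - q)). lra. }
  pose proof (Nv_F_bound p q s Hc) as HB. fold s' in HB. rewrite Hpq in HB.
  replace (2 * (p / 2) ^ 2 / Nv p q s) with (p^2 / (2 * Nv p q s)) in HB by (field; lra).
  pose proof (Kprime_id p q s Hc) as HKK. fold s' in HKK. rewrite Hpq in HKK.
  apply (key2 p q (fst s) (snd s) (fst s') (fst (Fc p q s')) (Nv p q s) (Nv p q s')
           (p * fst s + q * snd s - p/2) (p * fst s' + q * snd s' - p/2)); try assumption; try reflexivity.
  unfold Nv. pose proof (pow2_ge_0 (fst s' - p)). pose proof (pow2_ge_0 (snd s' - q)). lra.
Qed.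

Lemma cmod_dist_sym x y : Cmod (Cminus x y) = Cmod (Cminus y x).
Proof.
  replace (Cminus x y) with (Copp (Cminus y x)). apply Cmod_opp.
  apply injective_projections; simpl; ring.
Qed.

Lemma cmod_tri3 x y c : Cmod (Cminus x c) <= Cmod (Cminus x y) + Cmod (Cminus y c).
Proof.
  replace (Cminus x c) with (Cplus (Cminus x y) (Cminus y c)). apply Cmod_triangle.
  apply injective_projections; simpl; ring.
Qed.

Lemma shrink_pt g h : Cmod g = 1 -> 0 < h <= 1/2 ->
  unit_disk (Cmult (RtoC (1 - h)) g) /\ Cmod (Cminus (Cmult (RtoC (1 - h)) g) g) = h.
Proof.
  intros Hg Hh. split.
  - unfold unit_disk. rewrite Cmod_mult, Cmod_R, Hg, Rabs_pos_eq; lra.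
  - replace (Cminus (Cmult (RtoC (1 - h)) g) g) with (Cmult (RtoC (- h)) g).
    rewrite Cmod_mult, Cmod_R, Hg, Rabs_left; lra.
    apply injective_projections; simpl; ring.
Qed.

Definition lip_at (f : C -> C) (g : C) (L : R) : Prop :=
  forall z, unit_disk z -> Cmod (Cminus (f z) (f g)) <= L * Cmod (Cminus z g).

Lemma boundary_le f c r L g : Cmod g = 1 -> 0 <= L ->
  (forall z, unit_disk z -> Cmod (Cminus (f z) c) < r) -> lip_at f g L ->
  Cmod (Cminus (f g) c) <= r.
Proof.
  intros Hg HL Hin Hl. destruct (Rle_or_lt (Cmod (Cminus (f g) c)) r) as [H|H]; [exact H|].
  exfalso. set (e := Cmod (Cminus (f g) c) - r).
  set (h := Rmin (1/2) (e / (2 * (L + 1)))).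
  assert (Hh : 0 < h <= 1/2).
  { unfold h. split. apply Rmin_pos. lra. apply Rdiv_lt_0_compat; unfold e; lra. apply Rmin_l. }
  assert (HhL : L * h <= e / 2).
  { assert (h <= e / (2 * (L + 1))) by apply Rmin_r.
    assert (e / (2 * (L+1)) * (2 * (L+1)) = e) by (field; lra).
    assert (0 < e) by (unfold e; lra). nra. }
  destruct (shrink_pt g h Hg Hh) as [Hz Hd].
  specialize (Hin _ Hz). specialize (Hl _ Hz). rewrite Hd in Hl.
  pose proof (cmod_tri3 (f g) (f (Cmult (RtoC (1 - h)) g)) c) as Ht.
  rewrite (cmod_dist_sym (f g) (f _)) in Ht. unfold e in *. lra.
Qed.

Lemma cluster_self f g L : Cmod g = 1 -> 0 <= L -> lip_at f g L ->
  in_cluster_set f g (f g).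
Proof.
  intros Hg HL Hl eps He.
  set (h := Rmin (1/2) (eps / (2 * (L + 1)))).
  assert (Hh : 0 < h <= 1/2).
  { unfold h. split. apply Rmin_pos. lra. apply Rdiv_lt_0_compat; lra. apply Rmin_l. }
  assert (HhL : L * h <= eps / 2 /\ h < eps).
  { assert (h <= eps / (2 * (L + 1))) by apply Rmin_r.
    assert (eps / (2 * (L+1)) * (2 * (L+1)) = eps) by (field; lra). nra. }
  destruct (shrink_pt g h Hg Hh) as [Hz Hd].
  exists (Cmult (RtoC (1 - h)) g). split; [exact Hz|]. rewrite Hd. split; [lra|].
  specialize (Hl _ Hz). rewrite Hd in Hl. lra.
Qed.

Lemma not_cluster f g w L : Cmod g = 1 -> 0 <= L -> lip_at f g L -> f g <> w ->
  ~ in_cluster_set f g w.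
Proof.
  intros Hg HL Hl Hne Hc.
  assert (Hd : 0 < Cmod (Cminus (f g) w)).
  { apply Cmod_gt_0. intro E. apply Hne.
    apply injective_projections; injection E; simpl; lra. }
  set (d := Cmod (Cminus (f g) w)) in *.
  destruct (Hc (d / (2 * (L + 1)))) as [z [Hz [H1 H2]]].
  { apply Rdiv_lt_0_compat; lra. }
  specialize (Hl _ Hz).
  pose proof (cmod_tri3 (f g) (f z) w) as Ht. rewrite (cmod_dist_sym (f g) (f z)) in Ht.
  assert (E1 : L * (d / (2 * (L+1))) + d / (2 * (L+1)) = d / 2) by (field; lra).
  assert (L * Cmod (Cminus z g) <= L * (d / (2 * (L + 1)))).
  { apply Rmult_le_compat_l; lra. }
  fold d in Ht. lra.
Qed.

Lemma tangency w eta r : Cmod w = 1 -> Cmod eta = 1 -> 0 < r < 1 ->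
  Cmod (Cminus w (Cmult (RtoC (1 - r)) eta)) <= r -> w = eta.
Proof.
  intros Hw He Hr H.
  assert (Hw2 : n2 w = 1) by (rewrite n2_cmod, Hw; ring).
  assert (He2 : n2 eta = 1) by (rewrite n2_cmod, He; ring).
  assert (H2 : n2 (Cminus w (Cmult (RtoC (1 - r)) eta)) <= r ^ 2).
  { rewrite n2_cmod. pose proof (Cmod_ge_0 (Cminus w (Cmult (RtoC (1 - r)) eta))). nra. }
  destruct w as [w1 w2], eta as [e1 e2]. unfold n2, Cminus, Cplus, Copp, Cmult, RtoC in *; simpl in *.
  assert (Hdot : w1 * e1 + w2 * e2 >= 1) by nra.
  assert (Hd : (w1 - e1)^2 + (w2 - e2)^2 <= 0) by nra.
  pose proof (pow2_ge_0 (w1 - e1)). pose proof (pow2_ge_0 (w2 - e2)).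
  assert (A1 : (w1 - e1) ^ 2 = 0) by lra. assert (A2 : (w2 - e2) ^ 2 = 0) by lra.
  simpl in A1, A2. rewrite Rmult_1_r in A1, A2.
  apply Rmult_integral in A1. apply Rmult_integral in A2.
  f_equal; lra.
Qed.

Lemma not_ELF_two f g1 g2 L1 L2 : Cmod g1 = 1 -> Cmod g2 = 1 ->
  Cmod (f g1) = 1 -> Cmod (f g2) = 1 -> f g1 <> f g2 ->
  0 <= L1 -> 0 <= L2 -> lip_at f g1 L1 -> lip_at f g2 L2 ->
  ~ essentially_linear_fractional f.
Proof.
  intros H1 H2 H3 H4 Hne HL1 HL2 Hl1 Hl2 [eta [zeta [_ [He [_ [[r [Hr Hin]] _]]]]]].
  unfold unit_circle in He.
  pose proof (boundary_le f _ r L1 g1 H1 HL1 Hin Hl1) as B1.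
  pose proof (boundary_le f _ r L2 g2 H2 HL2 Hin Hl2) as B2.
  apply Hne. rewrite (tangency _ _ r H3 He Hr B1), (tangency _ _ r H4 He Hr B2). reflexivity.
Qed.

Lemma not_ELF_same f g1 g2 L1 L2 : Cmod g1 = 1 -> Cmod g2 = 1 -> g1 <> g2 ->
  Cmod (f g1) = 1 -> f g1 = f g2 ->
  0 <= L1 -> 0 <= L2 -> lip_at f g1 L1 -> lip_at f g2 L2 ->
  ~ essentially_linear_fractional f.
Proof.
  intros H1 H2 Hne H3 Heq HL1 HL2 Hl1 Hl2 [eta [zeta [_ [He [_ [[r [Hr Hin]] [Hcl _]]]]]]].
  unfold unit_circle in He.
  pose proof (boundary_le f _ r L1 g1 H1 HL1 Hin Hl1) as B1.
  pose proof (tangency _ _ r H3 He Hr B1) as E.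
  assert (C1 := cluster_self f g1 L1 H1 HL1 Hl1).
  assert (C2 := cluster_self f g2 L2 H2 HL2 Hl2).
  rewrite E in C1. rewrite <- Heq, E in C2.
  apply (proj1 (Hcl g1 H1)) in C1. apply (proj1 (Hcl g2 H2)) in C2.
  apply Hne. congruence.
Qed.

Lemma cmod_eq_iff z r : 0 <= r -> (Cmod z = r <-> n2 z = r ^ 2).
Proof.
  intros Hr. rewrite n2_cmod. split; intro H'.
  - rewrite H'. reflexivity.
  - pose proof (Cmod_ge_0 z). nra.
Qed.

Lemma hyp_le p q : Cmod (Cminus (p, q) (RtoC (1/4))) <= 1/4 -> p^2 + q^2 <= p/2.
Proof.
  intro H. rewrite <- (Rabs_pos_eq (1/4)) in H by lra.
  assert (H2 : n2 (Cminus (p, q) (RtoC (1/4))) <= (1/4)^2).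
  { rewrite n2_cmod. pose proof (Cmod_ge_0 (Cminus (p, q) (RtoC (1/4)))). rewrite Rabs_pos_eq in H by lra. nra. }
  unfold n2, Cminus, Cplus, Copp, RtoC in H2; cbn [fst snd] in H2. nra.
Qed.

Lemma hyp_lt p q : Cmod (Cminus (p, q) (RtoC (1/4))) < 1/4 -> p^2 + q^2 < p/2.
Proof.
  intro H.
  assert (H2 : n2 (Cminus (p, q) (RtoC (1/4))) < (1/4)^2).
  { rewrite n2_cmod. pose proof (Cmod_ge_0 (Cminus (p, q) (RtoC (1/4)))). nra. }
  unfold n2, Cminus, Cplus, Copp, RtoC in H2; cbn [fst snd] in H2. nra.
Qed.

Lemma hyp_eq p q : Cmod (Cminus (p, q) (RtoC (1/4))) = 1/4 -> p^2 + q^2 = p/2.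
Proof.
  intro H.
  assert (H2 : n2 (Cminus (p, q) (RtoC (1/4))) = (1/4)^2).
  { rewrite n2_cmod, H. reflexivity. }
  unfold n2, Cminus, Cplus, Copp, RtoC in H2; cbn [fst snd] in H2. nra.
Qed.

Lemma quad_diff a z w : Cminus (quad_map a z) (quad_map a w) =
  Cmult (Cminus z w) (Cplus 1 (Cmult a (Cminus (Cplus z w) 2))).
Proof. unfold quad_map. ring. Qed.

Lemma cmod_a_le p q : p^2 + q^2 <= p/2 -> Cmod (p, q) <= 1/2.
Proof.
  intro H. assert (n2 (p, q) <= (1/2)^2) by (unfold n2; cbn [fst snd]; nra).
  rewrite n2_cmod in H0. pose proof (Cmod_ge_0 (p, q)). nra.
Qed.

Lemma quad_lip p q z w : p^2 + q^2 <= p/2 -> Cmod z <= 1 -> Cmod w <= 1 ->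
  Cmod (Cminus (quad_map (p, q) z) (quad_map (p, q) w)) <= 3 * Cmod (Cminus z w).
Proof.
  intros Ha Hz Hw. rewrite quad_diff, Cmod_mult.
  assert (B : Cmod (Cplus 1 (Cmult (p, q) (Cminus (Cplus z w) 2))) <= 3).
  { eapply Rle_trans. apply Cmod_triangle. rewrite Cmod_1, Cmod_mult.
    assert (Cmod (Cminus (Cplus z w) 2) <= 4).
    { unfold Cminus. eapply Rle_trans. apply Cmod_triangle. rewrite Cmod_opp.
      replace (Cmod 2) with 2. pose proof (Cmod_triangle z w). lra.
      rewrite Cmod_R, Rabs_pos_eq; lra. }
    pose proof (cmod_a_le p q Ha). pose proof (Cmod_ge_0 (p, q)).
    pose proof (Cmod_ge_0 (Cminus (Cplus z w) 2)). nra. }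
  pose proof (Cmod_ge_0 (Cminus z w)). rewrite (Rmult_comm 3). apply Rmult_le_compat_l; lra.
Qed.

Lemma Fre_ge p q s : p^2 + q^2 <= p/2 -> fst s > 1/2 -> fst (Fc p q s) >= fst s.
Proof.
  intros Ha Hs. assert (Hp : 0 <= p <= 1/2) by nra.
  assert (Hc : 0 < fst s - p) by lra.
  pose proof (Fre_lower p q s Hc).
  assert (q^2 / (fst s - p) <= p).
  { apply Rmult_le_reg_r with (fst s - p); [lra|].
    replace (q ^ 2 / (fst s - p) * (fst s - p)) with (q^2) by (field; lra). nra. }
  lra.
Qed.

Lemma Nv_pos p q s : p <= 1/2 -> fst s > 1/2 -> 0 < Nv p q s.
Proof.
  intros. unfold Nv. assert (0 < (fst s - p) ^ 2) by (apply pow_lt; lra).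
  pose proof (pow2_ge_0 (snd s - q)). lra.
Qed.

Lemma selfmap_S p q z : p^2 + q^2 <= p/2 -> unit_disk z ->
  exists s, fst s > 1/2 /\ Cmult (Cminus 1 (quad_map (p, q) z)) (Fc p q s) = 1.
Proof.
  intros Ha Hz. destruct (disk_to_s z Hz) as [s [Hs1 Hs2]].
  exists s. split; [exact Hs2|]. apply link; [exact Hs1|]. apply Nv_pos; nra.
Qed.

Lemma S_to_disk w S : Cmult (Cminus 1 w) S = 1 -> fst S > 1/2 -> unit_disk w.
Proof.
  intros H HS. unfold unit_disk.
  pose proof (modlt w S 1 H ltac:(lra) ltac:(lra)) as M.
  replace (Cminus w (Cmult (RtoC (1 - 1)) (RtoC 1))) with w in M. exact M.
  apply injective_projections; cbn; ring.
Qed.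

Lemma quad_selfmap p q z : p^2 + q^2 <= p/2 -> unit_disk z -> unit_disk (quad_map (p, q) z).
Proof.
  intros Ha Hz. destruct (selfmap_S p q z Ha Hz) as [s [Hs H]].
  apply (S_to_disk _ _ H). pose proof (Fre_ge p q s Ha Hs). lra.
Qed.

Lemma quad_closed p q z : p^2 + q^2 <= p/2 -> Cmod z <= 1 -> Cmod (quad_map (p, q) z) <= 1.
Proof.
  intros Ha Hz. destruct Hz as [Hz|Hz].
  - left. apply quad_selfmap; assumption.
  - assert (B := boundary_le (quad_map (p, q)) 0 1 3 z Hz ltac:(lra)).
    replace (Cminus (quad_map (p, q) z) 0) with (quad_map (p, q) z) in B.
    2: apply injective_projections; cbn; ring.
    apply B.
    + intros y Hy. replace (Cminus (quad_map (p, q) y) 0) with (quad_map (p, q) y).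
      apply quad_selfmap; assumption. apply injective_projections; cbn; ring.
    + intros y Hy. apply quad_lip; [assumption| left; exact Hy | lra].
Qed.

Lemma tangent_from_S f m : 0 < m ->
  (forall z, unit_disk z -> exists S, Cmult (Cminus 1 (f z)) S = 1 /\ fst S >= 1/2 + m) ->
  in_tangent_subdisk f (RtoC 1).
Proof.
  intros Hm H. exists (1 / (1 + m)). split.
  - split. apply Rdiv_lt_0_compat; lra.
    apply Rmult_lt_reg_r with (1 + m); [lra|]. replace (1 / (1 + m) * (1 + m)) with 1 by (field; lra). lra.
  - intros z Hz. destruct (H z Hz) as [S [HS1 HS2]].
    apply (modlt _ S); [exact HS1| apply Rdiv_lt_0_compat; lra|].
    replace (1 / (2 * (1 / (1 + m)))) with ((1 + m)/2) by (field; lra). lra.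
Qed.

Lemma one_preimage p q w : p^2 + q^2 <= p/2 -> (p, q) <> RtoC (1/2) -> Cmod w <= 1 ->
  quad_map (p, q) w = 1 -> w = 1.
Proof.
  intros Ha Hne Hw H.
  assert (E : Cmult (Cplus 1 (Cmult (p, q) (Cminus w 1))) (Cminus w 1) = 0).
  { transitivity (Cminus (quad_map (p, q) w) 1). unfold quad_map. ring. rewrite H. ring. }
  destruct (Ceq_dec (Cminus w 1) 0) as [E0|E0].
  - apply injective_projections; injection E0; cbn; lra.
  - exfalso. apply Cmult_cancel in E; [|exact E0].
    assert (Hw2 : n2 w <= 1) by (rewrite n2_cmod; pose proof (Cmod_ge_0 w); nra).
    destruct w as [w1 w2]. unfold n2 in Hw2; cbn [fst snd] in Hw2.
    injection E as X Y. unfold Cminus, Cplus, Copp, Cmult in X, Y; cbn in X, Y.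
    assert (X' : p * (w1 - 1) - q * w2 = -1) by lra.
    assert (Y' : p * w2 + q * (w1 - 1) = 0) by lra.
    assert (Hg : (w1 - 1)^2 + w2^2 + 2 * (w1 - 1) <= 0) by nra.
    set (g1 := w1 - 1) in *. set (g2 := w2) in *.
    assert (A1 : (p^2 + q^2) * g1 = - p).
    { transitivity (p * (p * g1 - q * g2) + q * (p * g2 + q * g1)). ring. rewrite X', Y'. ring. }
    assert (A2 : (p^2 + q^2) * (g1^2 + g2^2) = 1).
    { transitivity ((p * g1 - q * g2)^2 + (p * g2 + q * g1)^2). ring. rewrite X', Y'. ring. }
    assert (HA : 0 < p^2 + q^2).
    { destruct (Rle_or_lt (p^2+q^2) 0); [|lra]. assert (p^2 + q^2 = 0) by nra. rewrite H1 in A2. lra. }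
    assert (Hmul : (p^2+q^2) * (g1^2 + g2^2 + 2 * g1) <= 0).
    { assert (0 <= - (g1^2 + g2^2 + 2 * g1)) by lra. assert (0 <= (p^2+q^2) * (- (g1^2 + g2^2 + 2 * g1))) by (apply Rmult_le_pos; lra). lra. }
    assert (1 - 2 * p <= 0).
    { replace ((p^2+q^2) * (g1^2 + g2^2 + 2 * g1)) with ((p^2+q^2) * (g1^2+g2^2) + 2 * ((p^2+q^2)*g1)) in Hmul by ring.
      rewrite A1, A2 in Hmul. lra. }
    assert (p = 1/2) by nra. assert (q^2 <= 0) by nra. assert (q = 0) by nra.
    apply Hne. subst. reflexivity.
Qed.

Lemma bridge1 f (z l : C) : @is_derive C_AbsRing (AbsRing_NormedModule C_AbsRing) f z l -> @is_derive C_AbsRing C_NormedModule f z l.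
Proof. intro H. unfold is_derive, filterdiff in *. destruct H as [H1 H2]. split.
- destruct H1 as [A B [M HM]]. constructor. exact A. exact B. exists M. exact HM.
- intros x Hx eps. specialize (H2 x Hx eps). exact H2.
Qed.
Lemma bridge2 f (z l : C) : @is_derive C_AbsRing C_NormedModule f z l -> @is_derive C_AbsRing (AbsRing_NormedModule C_AbsRing) f z l.
Proof. intro H. unfold is_derive, filterdiff in *. destruct H as [H1 H2]. split.
- destruct H1 as [A B [M HM]]. constructor. exact A. exact B. exists M. exact HM.
- intros x Hx eps. specialize (H2 x Hx eps). exact H2.
Qed.

Lemma dmul (f g : C -> C) z df dg : is_derive f z df -> is_derive g z dg ->
  is_derive (fun x => Cmult (f x) (g x)) z (Cplus (Cmult df (g z)) (Cmult (f z) dg)).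
Proof. intros H1 H2. apply bridge1. exact (is_derive_mult f g z df dg (bridge2 _ _ _ H1) (bridge2 _ _ _ H2) Cmult_comm). Qed.

Lemma dplus (f g : C -> C) z df dg : is_derive f z df -> is_derive g z dg ->
  is_derive (fun x => Cplus (f x) (g x)) z (Cplus df dg).
Proof. intros H1 H2. exact (is_derive_plus f g z df dg H1 H2). Qed.

Lemma did (z : C) : is_derive (fun x : C => x) z (RtoC 1).
Proof. apply bridge1. exact (is_derive_id z). Qed.

Lemma dconst (c z : C) : is_derive (fun _ : C => c) z (RtoC 0).
Proof. exact (is_derive_const (V := C_NormedModule) c z). Qed.

Lemma dcomp (f g : C -> C) z df dg : is_derive f (g z) df -> is_derive g z dg ->
  is_derive (fun x => f (g x)) z (Cmult dg df).
Proof. intros H1 H2. exact (is_derive_comp f g z df dg H1 (bridge2 _ _ _ H2)). Qed.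

Lemma dext (f g : C -> C) (z d d' : C) : (forall x, f x = g x) -> d = d' -> is_derive f z d -> is_derive g z d'.
Proof. intros H E D. rewrite <- E. exact (is_derive_ext f g z d H D). Qed.

Definition dquad (a z : C) : C := Cplus (Cmult (Cmult 2 a) z) (Cminus 1 (Cmult 2 a)).

Lemma der_quad a z : is_derive (quad_map a) z (dquad a z).
Proof.
  pose proof (dplus _ _ z _ _ (dplus _ _ z _ _ (dmul _ _ z _ _ (dconst a z) (dmul _ _ z _ _ (did z) (did z)))
     (dmul _ _ z _ _ (dconst (Cminus 1 (Cmult 2 a)) z) (did z))) (dconst a z)) as D.
  eapply dext; [| |exact D].
  - intro x. reflexivity.
  - unfold dquad. ring.
Qed.

Lemma der_d1 a z : is_derive (dquad a) z (Cmult 2 a).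
Proof.
  pose proof (dplus _ _ z _ _ (dmul _ _ z _ _ (dconst (Cmult 2 a) z) (did z)) (dconst (Cminus 1 (Cmult 2 a)) z)) as D.
  eapply dext; [| |exact D].
  - intro x. reflexivity.
  - cbv beta. ring.
Qed.

Lemma test (f : C -> C) z d : is_derive f z d -> ex_derive f z.
Proof. intro H. exists d. exact H. Qed.

Lemma lim_lin (f : C -> C) (L c zeta : C) : (forall z, Cminus (f z) L = Cmult c (Cminus z zeta)) ->
  forall eps : R, 0 < eps -> exists delta : R, 0 < delta /\
    forall z, unit_disk z -> Cmod (Cminus z zeta) < delta -> Cmod (Cminus (f z) L) < eps.
Proof.
  intros H eps He. pose proof (Cmod_ge_0 c).
  exists (eps / (Cmod c + 1)). split. apply Rdiv_lt_0_compat; lra.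
  intros z _ Hz. rewrite H, Cmod_mult.
  assert (Cmod c * Cmod (Cminus z zeta) <= Cmod c * (eps / (Cmod c + 1))).
  { apply Rmult_le_compat_l; lra. }
  assert (Cmod c * (eps / (Cmod c + 1)) < eps).
  { apply Rmult_lt_reg_r with (Cmod c + 1); [lra|].
    replace (Cmod c * (eps / (Cmod c + 1)) * (Cmod c + 1)) with (Cmod c * eps) by (field; lra). nra. }
  lra.
Qed.

Lemma third_quad a : third_deriv_extends (quad_map a) (RtoC 1).
Proof.
  exists (dquad a), (fun _ => Cmult 2 a), (fun _ => RtoC 0).
  split; [intros z _; apply der_quad|].
  split; [intros z _; apply der_d1|].
  split; [intros z _; apply dconst|].
  exists (RtoC 0). apply (lim_lin _ _ (RtoC 0)). intro z. ring.
Qed.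

Definition f2c (a z : C) : C :=
  Cplus (Cmult (Cmult 2 a) (dquad a (quad_map a z))) (Cmult (dquad a z) (Cmult (dquad a z) (Cmult 2 a))).
Definition f3c (a z : C) : C := Cmult (Cmult 12 (Cmult a a)) (dquad a z).

Lemma third_quad2 a : third_deriv_extends (fun z => quad_map a (quad_map a z)) (RtoC 1).
Proof.
  exists (fun z => Cmult (dquad a z) (dquad a (quad_map a z))), (f2c a), (f3c a).
  split.
  { intros z _. exact (dcomp _ _ z _ _ (der_quad a (quad_map a z)) (der_quad a z)). }
  split.
  { intros z _.
    pose proof (dmul _ _ z _ _ (der_d1 a z) (dcomp _ _ z _ _ (der_d1 a (quad_map a z)) (der_quad a z))) as D.
    eapply dext; [| |exact D]. intro x; reflexivity. cbv beta. unfold f2c. ring. }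
  split.
  { intros z _.
    pose proof (dplus _ _ z _ _
      (dmul _ _ z _ _ (dconst (Cmult 2 a) z) (dcomp _ _ z _ _ (der_d1 a (quad_map a z)) (der_quad a z)))
      (dmul _ _ z _ _ (der_d1 a z) (dmul _ _ z _ _ (der_d1 a z) (dconst (Cmult 2 a) z)))) as D.
    eapply dext; [| |exact D]. intro x; reflexivity. cbv beta. unfold f3c. ring. }
  exists (f3c a 1). apply (lim_lin _ _ (Cmult (Cmult 12 (Cmult a a)) (Cmult 2 a))). intro z.
  unfold f3c, dquad. ring.
Qed.

Lemma quad_one a : quad_map a 1 = 1.
Proof. unfold quad_map. ring. Qed.

Lemma cmod_one : Cmod (RtoC 1) = 1.
Proof. rewrite Cmod_R, Rabs_pos_eq; lra. Qed.
Lemma cmod_mone : Cmod (RtoC (-1)) = 1.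
Proof. rewrite Cmod_R, Rabs_left; lra. Qed.

Lemma lip_quad p q g : p^2 + q^2 <= p/2 -> Cmod g <= 1 -> lip_at (quad_map (p, q)) g 3.
Proof. intros Ha Hg z Hz. apply quad_lip; [exact Ha| left; exact Hz| exact Hg]. Qed.

Lemma lip_quad2 p q g : p^2 + q^2 <= p/2 -> Cmod g <= 1 ->
  lip_at (fun z => quad_map (p, q) (quad_map (p, q) z)) g 9.
Proof.
  intros Ha Hg z Hz. unfold unit_disk in Hz.
  eapply Rle_trans. apply quad_lip; [exact Ha| apply quad_closed; [exact Ha| lra] | apply quad_closed; assumption].
  pose proof (quad_lip p q z g Ha ltac:(lra) Hg). lra.
Qed.

Lemma holo_quad a : holomorphic_on_disk (quad_map a).
Proof. intros z _. exists (dquad a z). apply der_quad. Qed.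

Lemma holo_quad2 a : holomorphic_on_disk (fun z => quad_map a (quad_map a z)).
Proof. intros z _. eexists. exact (dcomp _ _ z _ _ (der_quad a (quad_map a z)) (der_quad a z)). Qed.

Lemma part1 p q : Cmod (Cminus (p, q) (RtoC (1/4))) < 1/4 -> ELF_at (quad_map (p, q)) (RtoC 1) (RtoC 1).
Proof.
  intro Hlt. pose proof (hyp_lt p q Hlt) as Ha.
  assert (Hle : p^2 + q^2 <= p/2) by lra.
  assert (Hp : 0 < p < 1/2) by nra.
  assert (Hne : (p, q) <> RtoC (1/2)).
  { intro E. injection E as E1 E2. subst. lra. }
  split; [split; [apply holo_quad| intros z Hz; apply quad_selfmap; assumption]|].
  split; [exact cmod_one|]. split; [exact cmod_one|].
  split.
  { apply (tangent_from_S _ (p - q^2 / (1/2 - p))).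
    - assert (q^2 / (1/2 - p) < p).
      { apply Rmult_lt_reg_r with (1/2 - p); [lra|].
        replace (q ^ 2 / (1/2 - p) * (1/2 - p)) with (q^2) by (field; lra). nra. }
      lra.
    - intros z Hz. destruct (selfmap_S p q z Hle Hz) as [s [Hs H]].
      exists (Fc p q s). split; [exact H|].
      pose proof (Fre_lower p q s ltac:(lra)).
      assert (q^2 / (fst s - p) <= q^2 / (1/2 - p)).
      { unfold Rdiv. apply Rmult_le_compat_l. apply pow2_ge_0.
        apply Rinv_le_contravar; lra. }
      lra. }
  split.
  { intros g Hg. unfold unit_circle in Hg. split.
    - intro Hc. destruct (Ceq_dec g 1) as [E|E]; [exact E|]. exfalso.
      refine (not_cluster _ g 1 3 Hg ltac:(lra) (lip_quad p q g Hle ltac:(lra)) _ Hc).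
      intro E2. apply E. apply (one_preimage p q g Hle Hne ltac:(lra) E2).
    - intro E. subst g. pose proof (cluster_self (quad_map (p, q)) 1 3 cmod_one ltac:(lra)
        (lip_quad p q 1 Hle ltac:(rewrite cmod_one; lra))) as C. rewrite quad_one in C. exact C. }
  apply third_quad.
Qed.

Lemma part2a p q : p^2 + q^2 = p/2 -> (p, q) <> RtoC (1/2) ->
  ~ essentially_linear_fractional (quad_map (p, q)).
Proof.
  intros Ha Hne. assert (Hle : p^2 + q^2 <= p/2) by lra.
  apply (not_ELF_two _ (RtoC 1) (RtoC (-1)) 3 3 cmod_one cmod_mone).
  - rewrite quad_one. exact cmod_one.
  - apply cmod_eq_iff; [lra|]. unfold quad_map, n2, Cminus, Cplus, Copp, Cmult, RtoC; cbn. nra.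
  - rewrite quad_one. intro E. apply Hne.
    unfold quad_map, Cminus, Cplus, Copp, Cmult, RtoC in E; cbn in E. injection E as E1 E2.
    apply injective_projections; cbn; lra.
  - lra.
  - lra.
  - apply lip_quad; [exact Hle| rewrite cmod_one; lra].
  - apply lip_quad; [exact Hle| rewrite cmod_mone; lra].
Qed.

Lemma part2b p q : p^2 + q^2 = p/2 -> (p, q) <> RtoC (1/2) -> (p, q) <> RtoC 0 ->
  essentially_linear_fractional (fun z => quad_map (p, q) (quad_map (p, q) z)).
Proof.
  intros Ha Hne Hn0. assert (Hle : p^2 + q^2 <= p/2) by lra.
  assert (Hq : 0 < q^2).
  { destruct (Rle_or_lt (q^2) 0) as [H|H]; [|exact H]. exfalso.
    assert (q = 0) by nra. subst q.
    assert (p = 0 \/ p = 1/2) by (assert (p * (p - 1/2) = 0) by nra; apply Rmult_integral in H0; lra).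
    destruct H0; subst; [apply Hn0|apply Hne]; reflexivity. }
  assert (Hp : 0 < p < 1/2) by nra.
  exists (RtoC 1), (RtoC 1).
  split; [split; [apply holo_quad2| intros z Hz; apply quad_selfmap; [exact Hle|]; apply quad_selfmap; assumption]|].
  split; [exact cmod_one|]. split; [exact cmod_one|].
  split.
  { apply (tangent_from_S _ (delta p q)). apply delta_pos; assumption.
    intros z Hz. destruct (selfmap_S p q z Hle Hz) as [s [Hs H]].
    pose proof (Fre_ge p q s Hle Hs) as Hs'.
    assert (H2 := link p q (quad_map (p, q) z) (Fc p q s) H ltac:(apply Nv_pos; lra)).
    exists (Fc p q (Fc p q s)). split; [exact H2|].
    pose proof (case2_bound p q s Ha Hq Hs). lra. }
  split.
  { intros g Hg. unfold unit_circle in Hg. split.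
    - intro Hc. destruct (Ceq_dec g 1) as [E|E]; [exact E|]. exfalso.
      refine (not_cluster _ g 1 9 Hg ltac:(lra) (lip_quad2 p q g Hle ltac:(lra)) _ Hc).
      intro E2. apply E.
      assert (Hg1 : Cmod (quad_map (p, q) g) <= 1) by (apply quad_closed; [exact Hle|lra]).
      pose proof (one_preimage p q _ Hle Hne Hg1 E2) as E3.
      apply (one_preimage p q g Hle Hne ltac:(lra) E3).
    - intro E. subst g. pose proof (cluster_self (fun z => quad_map (p, q) (quad_map (p, q) z)) 1 9 cmod_one ltac:(lra)
        (lip_quad2 p q 1 Hle ltac:(rewrite cmod_one; lra))) as C. cbv beta in C. rewrite !quad_one in C. exact C. }
  apply third_quad2.
Qed.

Lemma iter_closed p q n z : p^2 + q^2 <= p/2 -> Cmod z <= 1 -> Cmod (iterate (quad_map (p, q)) n z) <= 1.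
Proof.
  intros Ha Hz. induction n as [|n IH]. exact Hz.
  unfold iterate in *. rewrite Nat.iter_succ. apply quad_closed; assumption.
Qed.

Lemma iter_lip p q n z w : p^2 + q^2 <= p/2 -> Cmod z <= 1 -> Cmod w <= 1 ->
  Cmod (Cminus (iterate (quad_map (p, q)) n z) (iterate (quad_map (p, q)) n w)) <= 3 ^ n * Cmod (Cminus z w).
Proof.
  intros Ha Hz Hw. induction n as [|n IH].
  - simpl. lra.
  - pose proof (iter_closed p q n z Ha Hz). pose proof (iter_closed p q n w Ha Hw).
    unfold iterate in *. rewrite !Nat.iter_succ.
    eapply Rle_trans. apply quad_lip; assumption.
    simpl. lra.
Qed.

Lemma iter_fix1 a n : iterate (quad_map a) n 1 = 1.
Proof. induction n as [|n IH]. reflexivity. unfold iterate in *. rewrite Nat.iter_succ, IH. apply quad_one. Qed.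

Lemma part3 n : (1 <= n)%nat -> ~ essentially_linear_fractional (iterate (quad_map (RtoC (1/2))) n).
Proof.
  intro Hn. assert (Ha : (1/2)^2 + 0^2 <= (1/2)/2) by lra.
  assert (Hm : iterate (quad_map (RtoC (1/2))) n (RtoC (-1)) = 1).
  { destruct n as [|k]; [lia|]. unfold iterate. rewrite Nat.iter_succ_r.
    replace (quad_map (RtoC (1/2)) (RtoC (-1))) with (RtoC 1).
    apply (iter_fix1 (RtoC (1/2)) k).
    unfold quad_map, Cminus, Cplus, Copp, Cmult, RtoC. apply injective_projections; cbn; field. }
  assert (HL : 0 <= 3 ^ n) by (apply pow_le; lra).
  apply (not_ELF_same _ (RtoC 1) (RtoC (-1)) (3 ^ n) (3 ^ n) cmod_one cmod_mone).
  - intro E. injection E. lra.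
  - rewrite iter_fix1. exact cmod_one.
  - rewrite iter_fix1, Hm. reflexivity.
  - exact HL.
  - exact HL.
  - intros z Hz. apply (iter_lip (1/2) 0 n z 1 Ha); [unfold unit_disk in Hz; lra| rewrite cmod_one; lra].
  - intros z Hz. apply (iter_lip (1/2) 0 n z (RtoC (-1)) Ha); [unfold unit_disk in Hz; lra| rewrite cmod_mone; lra].
Qed.

Theorem mainTheorem5 (a : C) :
  Cmod (Cminus a (RtoC (1/4))) <= 1/4 -> a <> RtoC 0 ->
  (Cmod (Cminus a (RtoC (1/4))) < 1/4 ->
     ELF_at (quad_map a) (RtoC 1) (RtoC 1)) /\
  (Cmod (Cminus a (RtoC (1/4))) = 1/4 -> a <> RtoC (1/2) ->
     ~ essentially_linear_fractional (quad_map a) /\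
     essentially_linear_fractional (fun z => quad_map a (quad_map a z))) /\
  (a = RtoC (1/2) ->
     forall n : nat, (1 <= n)%nat ->
       ~ essentially_linear_fractional (iterate (quad_map a) n)).
Proof.
  intros Hle Hn0. destruct a as [p q]. split; [|split].
  - apply part1.
  - intros Heq Hne. pose proof (hyp_eq p q Heq) as Ha. split.
    + apply part2a; assumption.
    + apply part2b; assumption.
  - intros E n Hn. rewrite E. apply part3. exact Hn.
Qed.
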